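(* Let $(a_n)_{n\ge0}$ be the sequence $a_0=1$, $a_1=1$, $a_n=2a_{n-1}+a_{n-2}$ for $n\ge2$ (so $a=(1,1,3,7,17,41,\ldots)$, the numerators of the continued fraction convergents to $\sqrt2$). Then for all $n\ge0$, $a_n=\sum_{i=0}^n\binom{n}{i}(-1)^i2^{n-i}a_i$, and for all $n\ge1$, $$\sum_{i=0}^{n-1}\binom{n}{i}(-1)^i2^{n-i}a_i=\begin{cases}0,& n\text{ even},\\ 2a_n,& n\text{ odd}.\end{cases}$$ *)

(* Defs.v *)
From mathcomp Require Import all_boot all_order all_algebra.
Set Implicit Arguments. Unset Strict Implicit. Unset Printing Implicit Defensive.
Import GRing.Theory Num.Theory.
Local Open Scope ring_scope.

Fixpoint a (n : nat) : int :=
  match n with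
  | 0%N => 1
  | 1%N => 1
  | (m.+1 as k).+1 => 2 * a k + a m
  end.

(* Main.v *)
Require Import Defs.
From mathcomp Require Import all_boot all_order all_algebra.
From mathcomp Require Import all_field ring.
Import GRing.Theory Num.Theory.
Local Open Scope ring_scope.

Local Notation s := (sqrtC (2 : algC)).

Lemma s2 : s ^+ 2 = 2.
Proof. exact: sqrtCK. Qed.

Lemma closed_form n : (a n)%:~R * 2 = (1 + s) ^+ n + (1 - s) ^+ n :> algC.
Proof.
suff H : ((a n)%:~R * 2 = (1 + s) ^+ n + (1 - s) ^+ n :> algC) /\
         ((a n.+1)%:~R * 2 = (1 + s) ^+ n.+1 + (1 - s) ^+ n.+1 :> algC) by case: H.
elim: n => [|n [IH1 IH2]].
  split; first by rewrite /= !expr0 mul1r.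
  by rewrite /= !expr1 mul1r addrACA subrr addr0; ring.
split => //.
have -> : a n.+2 = 2 * a n.+1 + a n by [].
rewrite rmorphD rmorphM /= mulrDl -mulrA IH2 IH1.
have q1 : (1 + s) ^+ 2 = 2 * (1 + s) + 1 by rewrite sqrrD s2 expr1n; ring.
have q2 : (1 - s) ^+ 2 = 2 * (1 - s) + 1 by rewrite sqrrB s2 expr1n; ring.
have e1 : (1 + s) ^+ n.+2 = 2 * (1 + s) ^+ n.+1 + (1 + s) ^+ n.
  by rewrite !exprS mulrA -expr2 q1; ring.
have e2 : (1 - s) ^+ n.+2 = 2 * (1 - s) ^+ n.+1 + (1 - s) ^+ n.
  by rewrite !exprS mulrA -expr2 q2; ring.
rewrite e1 e2. have -> : (2%:~R : algC) = 2 by []. ring.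
Qed.

Lemma binsum n (x : algC) :
  \sum_(i < n.+1) ('C(n, i))%:R * (-1) ^+ i * 2 ^+ (n - i) * x ^+ i = (2 - x) ^+ n.
Proof.
rewrite exprDn; apply: eq_bigr => i _.
rewrite -[RHS]mulr_natl (exprNn x); set t := 2 ^+ _; set u := x ^+ _; set v := (-1) ^+ _; ring.
Qed.

Lemma isum (I : Type) (r : seq I) (P : pred I) (F : I -> int) :
  (\sum_(i <- r | P i) F i)%:~R = \sum_(i <- r | P i) (F i)%:~R :> algC.
Proof. exact: (big_morph _ (intrD _) (mulr0z _)). Qed.

Lemma iexp (x : int) k : (x ^+ k)%:~R = x%:~R ^+ k :> algC.
Proof.
elim: k => [|k IH]; first by rewrite !expr0.
by rewrite !exprS intrM IH.
Qed.

Lemma inat k : ((k%:R : int))%:~R = k%:R :> algC.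
Proof. by rewrite mulrz_nat. Qed.

Lemma closed_form' i (c : algC) : c * (a i)%:~R * 2 = c * (1 + s) ^+ i + c * (1 - s) ^+ i.
Proof. by rewrite -mulrA closed_form mulrDr. Qed.

Lemma part1 n :
  a n = \sum_(0 <= i < n.+1) ('C(n, i))%:R * (-1) ^+ i * 2 ^+ (n - i) * a i.
Proof.
apply: (@intr_inj algC); apply: (@mulIf algC 2); first by rewrite pnatr_eq0.
rewrite (closed_form n) big_mkord isum mulr_suml.
under eq_bigr => i _ do rewrite !intrM inat intr_sign iexp closed_form'.
rewrite big_split /=.
have h2 : (2%:~R : algC) = 2 by [].
rewrite h2.
rewrite !binsum.
have -> : 2 - (1 + s) = 1 - s by ring.
have -> : 2 - (1 - s) = 1 + s by ring.
by rewrite addrC.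
Qed.


Theorem mainTheorem10 :
  (forall n : nat,
     a n = \sum_(0 <= i < n.+1) ('C(n, i))%:R * (-1) ^+ i * 2 ^+ (n - i) * a i)
  /\
  (forall n : nat, (1 <= n)%N ->
     \sum_(0 <= i < n) ('C(n, i))%:R * (-1) ^+ i * 2 ^+ (n - i) * a i
       = (if odd n then 2 * a n else 0)).
Proof.
split; first exact: part1.
move=> n _.
have := part1 n.
rewrite big_nat_recr //= binn subnn expr0 mulr1 mul1r -signr_odd.
set S := \sum_(0 <= i < n) _.
case: (odd n) => /= H.
  have -> : S = a n - (-1) ^+ 1 * a n by rewrite {1}H; ring.
  by rewrite expr1; ring.
have -> : S = a n - (-1) ^+ 0 * a n by rewrite {1}H; ring.
by rewrite expr0; ring.
Qed.
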